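(* Let $(\mathcal{S},d_{\mathcal{S}})$ be a metric state space and $\mathcal{A}$ an action set. Let $(F,g)$ be a Lipschitz model class with constant $K_F$ and let $\widehat T$ be its generalized transition function. Then $$K^{\mathcal{A}}_{W,W}(\widehat T):=\sup_{a\in\mathcal{A}}\sup_{\mu_1,\mu_2}\frac{W\big(\widehat T(\cdot\mid\mu_1,a),\widehat T(\cdot\mid\mu_2,a)\big)}{W(\mu_1,\mu_2)}\le K_F,$$ where the supremum is over probability distributions $\mu_1\ne\mu_2$ on $\mathcal{S}$.
   Context: A Lipschitz model class is a collection $F$ of functions $f:\mathcal{S}\to\mathcal{S}$ together with, for each $a\in\mathcal{A}$, a probability distribution $g(\cdot\mid a)$ over $F$ (independent of the state), such that $K_F:=\sup_{f\in F}\sup_{s_1\ne s_2}\frac{d_{\mathcal{S}}(f(s_1),f(s_2))}{d_{\mathcal{S}}(s_1,s_2)}<\infty$. Its induced transition is $\widehat T(s'\mid s,a)=\sum_f\mathbb{1}(f(s)=s')g(f\mid a)$ and its generalized transition on a distribution $\mu$ is $\widehat T(s'\mid\mu,a)=\int\widehat T(s'\mid s,a)\mu(s)\,ds$. $W$ is the first Wasserstein metric: $W(\mu_1,\mu_2)=\inf_j\iint j(s_1,s_2)d_{\mathcal{S}}(s_1,s_2)$ over couplings $j$ of $\mu_1,\mu_2$. *)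

(* Defs.v *)
From HB Require Import structures.
From mathcomp Require Import all_boot all_order all_algebra.
From mathcomp Require Import all_classical all_reals all_analysis.
Set Implicit Arguments. Unset Strict Implicit. Unset Printing Implicit Defensive.
Import Order.TTheory GRing.Theory Num.Theory.
Local Open Scope classical_set_scope.
Local Open Scope ring_scope.

Definition is_metric (R : realType) (S : Type) (dS : S -> S -> R) : Prop :=
  (forall x y, 0 <= dS x y) /\
  (forall x y, dS x y = 0 <-> x = y) /\
  (forall x y, dS x y = dS y x) /\
  (forall x y z, dS x z <= dS x y + dS y z).

Definition lip_const (R : realType) (S : Type) (dS : S -> S -> R)
  (F : nat -> S -> S) : \bar R :=
  ereal_sup [set x : \bar R | exists (i : nat) (s1 s2 : S),
     s1 <> s2 /\ x = ((dS (F i s1) (F i s2) / dS s1 s2)%:E)].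

Definition coupling (R : realType) (d : measure_display) (S : measurableType d)
  (nu1 nu2 : set S -> \bar R) (j : probability (S * S)%type R) : Prop :=
  (forall A : set S, measurable A -> j (A `*` setT) = nu1 A) /\
  (forall A : set S, measurable A -> j (setT `*` A) = nu2 A).

Definition wasserstein (R : realType) (d : measure_display) (S : measurableType d)
  (dS : S -> S -> R) (nu1 nu2 : set S -> \bar R) : \bar R :=
  ereal_inf [set x : \bar R | exists j : probability (S * S)%type R,
     coupling nu1 nu2 j /\ x = (\int[j]_z (dS z.1 z.2)%:E)%E].

Definition model_trans (R : realType) (S A : Type)
  (F : nat -> S -> S) (g : A -> nat -> R) (s : S) (a : A) (B : set S) : \bar R :=
  (\sum_(i <oo) ((g a i)%:E * (\1_B (F i s))%:E))%E.

Definition gen_trans (R : realType) (d : measure_display) (S : measurableType d)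
  (A : Type) (F : nat -> S -> S) (g : A -> nat -> R)
  (mu : probability S R) (a : A) : set S -> \bar R :=
  fun B => (\int[mu]_s model_trans F g s a B)%E.

(* Main.v *)
Require Import Defs.
From HB Require Import structures.
From mathcomp Require Import all_boot all_order all_algebra.
From mathcomp Require Import all_classical all_reals all_analysis.
From mathcomp Require Import measurable_realfun.
Import Order.TTheory GRing.Theory Num.Theory.
Local Open Scope classical_set_scope.
Local Open Scope ring_scope.

Section mix.
Local Open Scope ereal_scope.
Context (R : realType) (d : measure_display) (S : measurableType d).
Variables (F : nat -> S -> S) (w : nat -> {nonneg R}).
Hypothesis hF : forall i, measurable_fun [set: S] (F i).
Hypothesis hw : \sum_(i <oo) ((w i)%:num)%:E = 1.
Variable j : probability (S * S)%type R.

Definition Fp i (z : S * S) : S * S := (F i z.1, F i z.2).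
Lemma mFp i : measurable_fun [set: S * S] (Fp i).
Proof.
apply: measurable_fun_pair; apply: measurableT_comp => //.
Qed.

Definition pm (i : nat) : {measure set (S * S)%type -> \bar R}.
Proof. refine (pushforward j (Fp i)); exact: mFp. Defined.
Lemma pmE i A : pm i A = j (Fp i @^-1` A). Proof. by []. Qed.
Definition mix (_ : \sum_(i <oo) ((w i)%:num)%:E = 1) : set (S * S)%type -> \bar R := mseries (fun i => mscale (w i) (pm i)) 0.
HB.instance Definition _ := Measure.copy (mix hw) (mseries (fun i => mscale (w i) (pm i)) 0).
Lemma mixE A : mix hw A = \sum_(i <oo) ((w i)%:num)%:E * j (Fp i @^-1` A).
Proof. by []. Qed.
Lemma mix_setT : mix hw setT = 1.
Proof. rewrite mixE -[RHS]hw; apply: eq_eseriesr => i _. by rewrite preimage_setT probability_setT mule1. Qed.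
HB.instance Definition _ := Measure_isProbability.Build _ _ _ (mix hw) mix_setT.

Lemma mix_fst (mu : set S -> \bar R) :
  (forall A, measurable A -> j (A `*` setT) = mu A) ->
  forall A, measurable A ->
  mix hw (A `*` setT) = \sum_(i <oo) ((w i)%:num)%:E * mu (F i @^-1` A).
Proof.
move=> hj A mA; rewrite mixE; apply: eq_eseriesr => i _.
have -> : Fp i @^-1` (A `*` setT) = (F i @^-1` A) `*` setT.
  by apply/seteqP; split => z /=; rewrite /Fp /=; move=> [].
by rewrite hj // -[X in measurable X]setTI; exact: hF.
Qed.

Lemma mix_snd (mu : set S -> \bar R) :
  (forall A, measurable A -> j (setT `*` A) = mu A) ->
  forall A, measurable A ->
  mix hw (setT `*` A) = \sum_(i <oo) ((w i)%:num)%:E * mu (F i @^-1` A).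
Proof.
move=> hj A mA; rewrite mixE; apply: eq_eseriesr => i _.
have -> : Fp i @^-1` (setT `*` A) = setT `*` (F i @^-1` A).
  by apply/seteqP; split => z /=; rewrite /Fp /=; move=> [].
by rewrite hj // -[X in measurable X]setTI; exact: hF.
Qed.

Variable dS : S -> S -> R.
Hypothesis hd : measurable_fun [set: S * S] (fun z : S * S => dS z.1 z.2).
Hypothesis d0 : forall x y, (0 <= dS x y)%R.
Variable K : R.
Hypothesis K0 : (0 <= K)%R.
Hypothesis hK : forall i x y, (dS (F i x) (F i y) <= K * dS x y)%R.

Lemma mix_int :
  \int[mix hw]_z (dS z.1 z.2)%:E <= K%:E * \int[j]_z (dS z.1 z.2)%:E.
Proof.
have mdE : measurable_fun [set: S * S] (fun z : S * S => (dS z.1 z.2)%:E).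
  exact/measurable_EFinP.
have E i : \int[mscale (w i) (pm i)]_z (dS z.1 z.2)%:E =
    ((w i)%:num)%:E * \int[j]_z (dS (F i z.1) (F i z.2))%:E.
  rewrite ge0_integral_mscale //; last by move=> z _; rewrite lee_fin.
  congr (_ * _).
  rewrite /pm /= ge0_integral_pushforward //; last by move=> z _; rewrite lee_fin.
  exact: mFp.
rewrite /mix ge0_integral_measure_series //; last by move=> z _; rewrite lee_fin.
rewrite (eq_eseriesr (fun i _ => E i)).
set c := K%:E * _.
have c0 : 0 <= c by rewrite mule_ge0 ?lee_fin // integral_ge0 // => z _; rewrite lee_fin.
apply: (@le_trans _ _ (\sum_(i <oo) ((w i)%:num)%:E * c)).
  apply: lee_nneseries => [i _ _|i _].
    by rewrite mule_ge0 ?lee_fin // integral_ge0 // => z _; rewrite lee_fin.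
  apply: lee_wpmul2l; first by rewrite lee_fin.
  have -> : c = \int[j]_z (K%:E * (dS z.1 z.2)%:E).
    rewrite /c ge0_integralZl //; by [move=> z _; rewrite lee_fin | rewrite lee_fin].
  apply: ge0_le_integral => //.
  - by move=> z _; rewrite lee_fin.
  - apply/measurable_EFinP; apply: measurableT_comp hd (mFp i).
  - by apply: emeasurable_funM => //; exact: measurable_cst.
  - by move=> z _; rewrite -EFinM lee_fin; exact: hK.
move: c0; case: c => [r| |] // r0.
  under eq_eseriesr do rewrite muleC.
  by rewrite nneseriesZl ?hw ?mule1 // => i _; rewrite lee_fin.
by rewrite leey.
Qed.
End mix.

Section main.
Local Open Scope ereal_scope.

Lemma gen_transE (R : realType) (d : measure_display) (S : measurableType d)
  (Act : Type) (F : nat -> S -> S) (g : Act -> nat -> R)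
  (hF : forall i, measurable_fun [set: S] (F i)) (hg : forall a i, (0 <= g a i)%R)
  (mu : probability S R) (a : Act) (A : set S) : measurable A ->
  gen_trans F g mu a A = \sum_(i <oo) (g a i)%:E * mu (F i @^-1` A).
Proof.
move=> mA; rewrite /gen_trans /model_trans.
have mFA i : measurable (F i @^-1` A).
  by rewrite -[X in measurable X]setTI; exact: hF.
rewrite integral_nneseries //; last 2 first.
- move=> i; apply/measurable_EFinP; apply: measurable_funM; first exact: measurable_cst.
  have -> : (fun x => \1_A (F i x)) = \1_(F i @^-1` A) :> (S -> R) by [].
  exact: measurable_indic.
- by move=> i x _; rewrite -EFinM lee_fin mulr_ge0.
apply: eq_eseriesr => i _.
rewrite ge0_integralZl //; last 2 first.
- have -> : (fun x => (\1_A (F i x))%:E) = (fun x => (\1_(F i @^-1` A) x)%:E) :> (S -> \bar R) by [].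
  by apply/measurable_EFinP; exact: measurable_indic.
- by rewrite lee_fin.
congr (_ * _).
have -> : (fun x => (\1_A (F i x))%:E) = (fun x => (\1_(F i @^-1` A) x)%:E) :> (S -> \bar R) by [].
by rewrite integral_indic // setIT.
Qed.


Lemma key {R : realType} {d : measure_display} {S : measurableType d}
  {dS : S -> S -> R} {Act : Type} {F : nat -> S -> S} {g : Act -> nat -> R}
  (hd : measurable_fun [set: S * S] (fun z : S * S => dS z.1 z.2))
  (d0 : forall x y, (0 <= dS x y)%R)
  (hF : forall i, measurable_fun [set: S] (F i)) (hg : forall a i, (0 <= g a i)%R)
  (hs : forall a, \sum_(i <oo) (g a i)%:E = 1)
  {K : R} (K0 : (0 <= K)%R) (hK : forall i x y, (dS (F i x) (F i y) <= K * dS x y)%R)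
  (a : Act) {mu1 mu2 : probability S R} {j : probability (S * S)%type R} :
  coupling mu1 mu2 j ->
  wasserstein dS (gen_trans F g mu1 a) (gen_trans F g mu2 a) <=
  K%:E * \int[j]_z (dS z.1 z.2)%:E.
Proof.
move=> [c1 c2].
pose w i := NngNum (hg a i).
have hw : \sum_(i <oo) ((w i)%:num)%:E = 1 by exact: hs.
have MI := @mix_int R d S F w hF hw j dS hd d0 K K0 hK. apply: le_trans MI.
apply: ge_ereal_inf; exists (\int[@mix R d S F w hF j hw]_z (dS z.1 z.2)%:E) => //.
exists (@mix R d S F w hF j hw); split => //; split => A mA.
- by apply: (eq_trans (@mix_fst R d S F w hF hw j _ c1 A mA)); rewrite gen_transE.
- by apply: (eq_trans (@mix_snd R d S F w hF hw j _ c2 A mA)); rewrite gen_transE.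
Qed.

Lemma prod_coupling {R : realType} {d : measure_display} {S : measurableType d}
  (mu1 mu2 : probability S R) : coupling mu1 mu2 (mu1 \x mu2).
Proof.
split => A mA.
- apply: eq_trans; first exact: product_measure1E.
  by rewrite -[RHS]mule1; congr (_ * _); exact: probability_setT.
- apply: eq_trans; first exact: (product_measure1E _ _ measurableT mA).
  by rewrite -[RHS]mul1e; congr (_ * _); exact: probability_setT.
Qed.

End main.

Theorem lemma1 (R : realType) (d : measure_display) (S : measurableType d)
  (dS : S -> S -> R) (Act : Type) (F : nat -> S -> S) (g : Act -> nat -> R) :
  is_metric dS ->
  measurable_fun [set: S * S] (fun z : S * S => dS z.1 z.2) ->
  (forall i, measurable_fun [set: S] (F i)) ->
  (forall a i, 0 <= g a i) ->
  (forall a, (\sum_(i <oo) (g a i)%:E)%E = 1%E) ->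
  (lip_const dS F < +oo)%E ->
  forall (a : Act) (mu1 mu2 : probability S R), mu1 <> mu2 ->
    (wasserstein dS (gen_trans F g mu1 a) (gen_trans F g mu2 a)
     <= lip_const dS F * wasserstein dS mu1 mu2)%E.
Proof.
move=> [d0 [deq [dsym dtri]]] hd hF hg hs hL a mu1 mu2 _.
have dxx x : dS x x = 0 by apply/deq.
have W0 : (0 <= wasserstein dS mu1 mu2)%E.
  apply: le_ereal_inf_tmp => _ [j [_ ->]].
  by apply: integral_ge0 => z _; rewrite lee_fin.
have Wprod : (wasserstein dS mu1 mu2 <= \int[(mu1 \x mu2)%E]_z (dS z.1 z.2)%:E)%E.
  by apply: ge_ereal_inf; exists (\int[(mu1 \x mu2)%E]_z (dS z.1 z.2)%:E)%E => //;
     exists ((mu1 \x mu2)%E); split => //; exact: prod_coupling.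
case: (pselect (exists x y : S, x <> y)) => [[x0 [y0 xy0]]|nxy].
- have dpos x y : x <> y -> (0 < dS x y)%R.
    by move=> xy; rewrite lt0r d0 andbT; apply/eqP => /deq.
  have ub i x y : x <> y -> ((dS (F i x) (F i y) / dS x y)%:E <= lip_const dS F)%E.
    by move=> xy; apply: ereal_sup_ubound; exists i, x, y.
  have Lge0 : (0 <= lip_const dS F)%E.
    apply: le_trans (ub 0%N x0 y0 xy0); rewrite lee_fin divr_ge0 //.
  have Lfin : lip_const dS F \is a fin_num.
    by rewrite ge0_fin_numE.
  set L := lip_const dS F in ub Lge0 Lfin *.
  rewrite -(fineK Lfin) in ub Lge0 *.
  set K := fine L in ub Lge0 *.
  rewrite lee_fin in Lge0.
  have hK i x y : (dS (F i x) (F i y) <= K * dS x y)%R.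
    have [<-|xy] := pselect (x = y); first by rewrite !dxx mulr0.
    have := ub i x y xy; rewrite lee_fin ler_pdivrMr ?dpos //.
  have [K0|Kpos] := eqVneq K 0%R.
    rewrite K0 mul0e.
    apply: le_trans (key hd d0 hF hg hs Lge0 hK a (prod_coupling mu1 mu2)) _.
    by rewrite K0 mul0e.
  have Kgt0 : (0 < K)%R by rewrite lt0r Kpos.
  rewrite -ereal_inf_pZl //.
  apply: le_ereal_inf_tmp => _ [_ [j [cj ->]] <-].
  exact: (key hd d0 hF hg hs Lge0 hK a cj).
- have allxy (x y : S) : x = y.
    by apply: contrapT => xy; apply: nxy; exists x, y.
  have -> : lip_const dS F = -oo%E.
    rewrite /lip_const (_ : [set _ | _] = set0) ?ereal_sup0 //.
    by apply/seteqP; split => // z [i [s1 [s2 [s12 _]]]].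
  have W00 : wasserstein dS mu1 mu2 = 0.
    apply/eqP; rewrite eq_le W0 andbT; apply: le_trans Wprod _.
    rewrite le_eqVlt; apply/orP; left; apply/eqP.
    have -> : (fun z : S * S => (dS z.1 z.2)%:E) = cst 0%E.
      by apply/funext => z; rewrite (allxy z.1 z.2) dxx.
    by rewrite integral0.
  rewrite W00 mule0.
  have hK i x y : (dS (F i x) (F i y) <= 0 * dS x y)%R.
    by rewrite (allxy x y) dxx mul0r.
  apply: le_trans (key hd d0 hF hg hs (lexx 0%R) hK a (prod_coupling mu1 mu2)) _.
  by rewrite mul0e.
Qed.
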